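(* For every $\lambda>0$, the function $F_\lambda(e)=F(\lambda,e)$ is strictly convex on $I_\lambda$; indeed $\partial_{ee}^2F(\lambda,e)>0$ for all $e\in I_\lambda$.
   Context: Let $\gamma>0$; let $a_1,\dots,a_p>0$ with weights $\omega_i>0$, $\sum_i\omega_i=1$, and $b_1,\dots,b_n>0$ with weights $\pi_j>0$, $\sum_j\pi_j=1$; put $a^*=\max_i a_i$, $b^*=\max_j b_j$. Define $G(e)=\sum_{j=1}^n\frac{b_j\pi_j}{1+\gamma b_j e}$, $J=\{e: e>-1/(\gamma b^* )\}$, and for $\lambda>0$, $I_\lambda=\{e\in J: G(e)<\lambda/a^*\}$. Define $F(\lambda,e)=e-\sum_{i=1}^p\frac{a_i\omega_i}{a_iG(e)-\lambda}$. *)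

(* Defs.v *)
From Stdlib Require Import Reals.
Open Scope R_scope.

Fixpoint rsum (n : nat) (f : nat -> R) : R :=
  match n with
  | O => 0
  | S k => rsum k f + f k
  end.

(* rmax n f = max_{i<n} f i  (meaningful for n >= 1) *)
Fixpoint rmax (n : nat) (f : nat -> R) : R :=
  match n with
  | O => f O
  | S k => Rmax (rmax k f) (f k)
  end.

Definition Gfun (gamma : R) (n : nat) (b pi : nat -> R) (e : R) : R :=
  rsum n (fun j => b j * pi j / (1 + gamma * b j * e)).

Definition inJ (gamma : R) (n : nat) (b : nat -> R) (e : R) : Prop :=
  e > - / (gamma * rmax n b).

Definition inI (gamma : R) (p n : nat) (a b pi : nat -> R) (lam e : R) : Prop :=
  inJ gamma n b e /\ Gfun gamma n b pi e < lam / rmax p a.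

Definition Ffun (gamma : R) (p n : nat) (a omega b pi : nat -> R) (lam e : R) : R :=
  e - rsum p (fun i => a i * omega i / (a i * Gfun gamma n b pi e - lam)).

(* Main.v *)
Require Import Defs.
From Stdlib Require Import Reals Lra Psatz.
From Coquelicot Require Import Coquelicot.
Open Scope R_scope.

Lemma rsum_ext n f g : (forall k, (k < n)%nat -> f k = g k) -> rsum n f = rsum n g.
Proof.
  induction n; intros H; simpl; auto.
  rewrite IHn; [rewrite H; auto|intros; apply H; lia].
Qed.

Lemma rsum_le n f g : (forall k, (k < n)%nat -> f k <= g k) -> rsum n f <= rsum n g.
Proof.
  induction n; intros H; simpl; [lra|].
  assert (rsum n f <= rsum n g) by (apply IHn; intros; apply H; lia).
  assert (f n <= g n) by (apply H; lia). lra.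
Qed.

Lemma rsum_lt n f g : (1 <= n)%nat -> (forall k, (k < n)%nat -> f k < g k) -> rsum n f < rsum n g.
Proof.
  destruct n; intros Hn H; [lia|]. simpl.
  assert (rsum n f <= rsum n g) by (apply rsum_le; intros; apply Rlt_le, H; lia).
  assert (f n < g n) by (apply H; lia). lra.
Qed.

Lemma rsum_zero n : rsum n (fun _ => 0) = 0.
Proof. induction n; simpl; [|rewrite IHn]; lra. Qed.

Lemma rsum_lin n t s f g : rsum n (fun k => t * f k + s * g k) = t * rsum n f + s * rsum n g.
Proof. induction n; simpl; [|rewrite IHn]; ring. Qed.

Lemma rmax_ge n f i : (i < n)%nat -> f i <= rmax n f.
Proof.
  induction n; intros H; [lia|]. simpl.
  destruct (Nat.eq_dec i n) as [->|Hne].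
  - apply Rmax_r.
  - eapply Rle_trans; [apply IHn; lia|apply Rmax_l].
Qed.

Lemma rsum_nz n f : rsum n f = 1 -> (1 <= n)%nat.
Proof. destruct n; simpl; intros; [lra|lia]. Qed.

Lemma is_derive_eqv (f : R -> R) (x l l' : R) : is_derive f x l -> l = l' -> is_derive f x l'.
Proof. intros H ->; exact H. Qed.

Lemma rsum_derive n (f : nat -> R -> R) (df : nat -> R) x :
  (forall k, (k < n)%nat -> is_derive (f k) x (df k)) ->
  @is_derive R_AbsRing R_NormedModule (fun y => rsum n (fun k => f k y)) x (rsum n df).
Proof.
  induction n; intros H; simpl.
  - eapply is_derive_eqv; [apply (is_derive_const (V:=R_NormedModule))|reflexivity].
  - eapply is_derive_eqv; [apply (is_derive_plus (fun y => rsum n (fun k => f k y)) (f n))|reflexivity].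
    + apply IHn; intros; apply H; lia.
    + apply H; lia.
Qed.

Lemma harm X Y t : 0 < X -> 0 < Y -> 0 < t < 1 ->
  / (t * X + (1 - t) * Y) <= t / X + (1 - t) / Y /\
  (X <> Y -> / (t * X + (1 - t) * Y) < t / X + (1 - t) / Y).
Proof.
  intros HX HY Ht.
  assert (HS : 0 < t * X + (1 - t) * Y) by nra.
  assert (E : t / X + (1 - t) / Y - / (t * X + (1 - t) * Y)
     = t * (1 - t) * (X - Y)^2 * / (X * Y * (t * X + (1 - t) * Y))) by (field; repeat split; lra).
  assert (0 < / (X * Y * (t * X + (1 - t) * Y))) by (apply Rinv_0_lt_compat; apply Rmult_lt_0_compat; [apply Rmult_lt_0_compat|]; assumption).
  assert (Htt : 0 < t * (1 - t)) by nra.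
  assert (Hsq : 0 <= (X - Y)^2) by apply pow2_ge_0.
  split.
  - assert (0 <= t * (1 - t) * (X - Y)^2) by (apply Rmult_le_pos; lra).
    assert (0 <= t * (1 - t) * (X - Y)^2 * / (X * Y * (t * X + (1 - t) * Y))) by (apply Rmult_le_pos; lra). lra.
  - intros Hne. assert (0 < (X - Y)^2) by (assert (X - Y <> 0) by lra; simpl; rewrite Rmult_1_r; apply Rsqr_pos_lt; auto).
    assert (0 < t * (1 - t) * (X - Y)^2) by (apply Rmult_lt_0_compat; lra).
    assert (0 < t * (1 - t) * (X - Y)^2 * / (X * Y * (t * X + (1 - t) * Y))) by (apply Rmult_lt_0_compat; lra). lra.
Qed.

Lemma term1 (g : R -> R) K c lam x dgx : is_derive g x dgx -> c * g x - lam <> 0 ->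
  is_derive (fun y => K / (c * g y - lam)) x (- K * (c * dgx) / (c * g x - lam)^2).
Proof.
  intros Hg HD.
  assert (H1 : is_derive (fun y => c * g y - lam) x (c * dgx)).
  { eapply is_derive_eqv.
    apply (is_derive_minus (fun y => c * g y) (fun _ => lam)); [apply is_derive_scal, Hg|apply is_derive_const].
    unfold minus, plus, opp, zero; simpl; ring. }
  eapply is_derive_eqv.
  apply (is_derive_div (fun _ => K) (fun y => c * g y - lam)); [apply is_derive_const|exact H1|exact HD].
  unfold zero; simpl; field; repeat split; auto.
Qed.

Lemma term2 (g dg : R -> R) K c lam x dgx ddgx : is_derive g x dgx -> is_derive dg x ddgx ->
  c * g x - lam <> 0 ->
  is_derive (fun y => K * dg y / (c * g y - lam)^2) x
    ((K * ddgx * (c * g x - lam)^2 - K * dg x * (2 * (c * dgx) * (c * g x - lam))) / ((c * g x - lam)^2)^2).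
Proof.
  intros Hg Hdg HD.
  assert (H1 : is_derive (fun y => c * g y - lam) x (c * dgx)).
  { eapply is_derive_eqv.
    apply (is_derive_minus (fun y => c * g y) (fun _ => lam)); [apply is_derive_scal, Hg|apply is_derive_const].
    unfold minus, plus, opp, zero; simpl; ring. }
  eapply is_derive_eqv.
  apply (is_derive_div (fun y => K * dg y) (fun y => (c * g y - lam)^2)).
  apply is_derive_scal, Hdg. apply is_derive_pow, H1. apply pow_nonzero, HD.
  simpl; field; repeat split; auto.
Qed.

Section S.
Variables (gamma : R) (p n : nat) (a omega b pi : nat -> R).

Definition Gd e := rsum n (fun j => - (b j * pi j * (gamma * b j)) / (1 + gamma * b j * e)^2).
Definition Gdd e := rsum n (fun j => 2 * (b j * pi j * (gamma * b j)^2) / (1 + gamma * b j * e)^3).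

Lemma G_derive e : (forall j, (j < n)%nat -> 1 + gamma * b j * e <> 0) ->
  is_derive (Gfun gamma n b pi) e (Gd e).
Proof.
  intros H. unfold Gd.
  apply (is_derive_ext (fun y => rsum n (fun k => (fun j y => b j * pi j / (1 + gamma * b j * y)) k y))).
  { intros; reflexivity. }
  apply rsum_derive. intros k Hk. specialize (H k Hk).
  auto_derive; [exact H|]. field; repeat split; auto.
Qed.

Lemma Gd_derive e : (forall j, (j < n)%nat -> 1 + gamma * b j * e <> 0) ->
  is_derive Gd e (Gdd e).
Proof.
  intros H. unfold Gdd.
  apply (is_derive_ext (fun y => rsum n (fun k => (fun j y => - (b j * pi j * (gamma * b j)) / (1 + gamma * b j * y)^2) k y))).
  { intros; reflexivity. }
  apply rsum_derive. intros k Hk. specialize (H k Hk).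
  auto_derive; [repeat apply Rmult_integral_contrapositive_currified; auto; lra|]. field; repeat split; auto.
Qed.
End S.

Theorem lemma3p8 (gamma : R) (p n : nat) (a omega b pi : nat -> R)
  (hgamma : 0 < gamma)
  (ha : forall i, (i < p)%nat -> 0 < a i)
  (homega : forall i, (i < p)%nat -> 0 < omega i)
  (homega1 : rsum p omega = 1)
  (hb : forall j, (j < n)%nat -> 0 < b j)
  (hpi : forall j, (j < n)%nat -> 0 < pi j)
  (hpi1 : rsum n pi = 1) :
  forall lam : R, 0 < lam ->
    (* strict convexity of F_lambda on I_lambda *)
    (forall x y t, inI gamma p n a b pi lam x -> inI gamma p n a b pi lam y ->
       x <> y -> 0 < t < 1 ->
       Ffun gamma p n a omega b pi lam (t * x + (1 - t) * y)
         < t * Ffun gamma p n a omega b pi lam x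
           + (1 - t) * Ffun gamma p n a omega b pi lam y) /\
    (* the second derivative in e is positive on I_lambda *)
    (exists F1 : R -> R,
       (forall e, inI gamma p n a b pi lam e ->
          derivable_pt_lim (Ffun gamma p n a omega b pi lam) e (F1 e)) /\
       (forall e, inI gamma p n a b pi lam e ->
          exists F2e : R, derivable_pt_lim F1 e F2e /\ 0 < F2e)).
Proof.
  intros lam hlam.
  pose proof (rsum_nz _ _ homega1) as Hp.
  pose proof (rsum_nz _ _ hpi1) as Hn.
  set (G := Gfun gamma n b pi).
  assert (HM : 0 < rmax n b).
  { eapply Rlt_le_trans; [apply (hb 0%nat); lia|apply rmax_ge; lia]. }
  assert (HA : 0 < rmax p a).
  { eapply Rlt_le_trans; [apply (ha 0%nat); lia|apply rmax_ge; lia]. }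
  assert (HJ : forall e, inJ gamma n b e -> forall j, (j < n)%nat -> 0 < 1 + gamma * b j * e).
  { intros e He j Hj. unfold inJ in He.
    pose proof (rmax_ge n b j Hj). pose proof (hb j Hj).
    assert (Hinv : gamma * rmax n b * / (gamma * rmax n b) = 1) by (field; repeat split; lra).
    assert (0 < / (gamma * rmax n b)) by (apply Rinv_0_lt_compat; nra).
    assert (0 <= gamma * b j) by (apply Rmult_le_pos; lra).
    destruct (Rle_or_lt 0 e).
    { assert (0 <= gamma * b j * e) by (apply Rmult_le_pos; lra). lra. }
    assert (0 <= (gamma * rmax n b - gamma * b j) * (- e)) by (apply Rmult_le_pos; nra).
    assert (0 < gamma * rmax n b * (e + / (gamma * rmax n b))) by (apply Rmult_lt_0_compat; nra).
    nra. }
  assert (HI : forall e, inI gamma p n a b pi lam e -> forall i, (i < p)%nat -> a i * G e - lam < 0).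
  { intros e [_ He] i Hi. fold G in He.
    pose proof (rmax_ge p a i Hi). pose proof (ha i Hi).
    assert (Hinv : rmax p a * (lam / rmax p a) = lam) by (field; repeat split; lra).
    destruct (Rle_or_lt (G e) 0); [nra|]. nra. }
  split.
  - intros x y t Hx Hy Hxy Ht.
    set (z := t * x + (1 - t) * y).
    assert (HGz : G z < t * G x + (1 - t) * G y).
    { unfold G, Gfun. rewrite <- rsum_lin. apply rsum_lt; auto.
      intros j Hj.
      pose proof (HJ x (proj1 Hx) j Hj). pose proof (HJ y (proj1 Hy) j Hj).
      pose proof (hb j Hj). pose proof (hpi j Hj).
      assert (Hz : 1 + gamma * b j * z = t * (1 + gamma * b j * x) + (1 - t) * (1 + gamma * b j * y))
        by (unfold z; ring).
      rewrite Hz.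
      assert (Hne : 1 + gamma * b j * x <> 1 + gamma * b j * y).
      { intro E. apply Hxy. apply (Rmult_eq_reg_l (gamma * b j)); [|nra]. lra. }
      destruct (harm _ _ t H H0 Ht) as [_ Hs]. specialize (Hs Hne).
      assert (0 < b j * pi j) by nra.
      unfold Rdiv. unfold Rdiv in Hs.
      replace (t * (b j * pi j * / (1 + gamma * b j * x)) + (1 - t) * (b j * pi j * / (1 + gamma * b j * y)))
        with (b j * pi j * (t * / (1 + gamma * b j * x) + (1 - t) * / (1 + gamma * b j * y))) by ring.
      apply Rmult_lt_compat_l; auto. }
    unfold Ffun. fold G. fold z.
    assert (Hs : rsum p (fun i => t * (a i * omega i / (a i * G x - lam)) + (1 - t) * (a i * omega i / (a i * G y - lam)))
                 < rsum p (fun i => a i * omega i / (a i * G z - lam))).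
    { apply rsum_lt; auto. intros i Hi.
      pose proof (HI x Hx i Hi). pose proof (HI y Hy i Hi).
      pose proof (ha i Hi). pose proof (homega i Hi).
      set (U := lam - a i * G x). set (V := lam - a i * G y). set (W := lam - a i * G z).
      assert (HU : 0 < U) by (unfold U; lra). assert (HV : 0 < V) by (unfold V; lra).
      assert (HW : t * U + (1 - t) * V < W).
      { unfold U, V, W. assert (a i * G z < a i * (t * G x + (1 - t) * G y)) by (apply Rmult_lt_compat_l; auto). nra. }
      assert (HS : 0 < t * U + (1 - t) * V) by nra.
      destruct (harm U V t HU HV Ht) as [Hle _].
      assert (/ W < / (t * U + (1 - t) * V)) by (apply Rinv_lt_contravar; nra).
      assert (K : 0 < a i * omega i) by nra.
      assert (HW0 : 0 < W) by lra. unfold W in HW0.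
      replace (a i * omega i / (a i * G x - lam)) with (- (a i * omega i) * / U) by (unfold U; field; repeat split; lra).
      replace (a i * omega i / (a i * G y - lam)) with (- (a i * omega i) * / V) by (unfold V; field; repeat split; lra).
      replace (a i * omega i / (a i * G z - lam)) with (- (a i * omega i) * / W) by (unfold W; field; repeat split; lra).
      unfold Rdiv in Hle.
      assert (a i * omega i * / W < a i * omega i * (t * / U + (1 - t) * / V)) by (apply Rmult_lt_compat_l; lra).
      nra. }
    rewrite rsum_lin in Hs. unfold z in *; lra.
  - set (F1 := fun e => 1 - rsum p (fun i => (- (a i * omega i) * a i) * Gd gamma n b pi e / (a i * G e - lam)^2)).
    exists F1. split.
    + intros e He. apply is_derive_Reals.
      assert (Hj : forall j, (j < n)%nat -> 1 + gamma * b j * e <> 0)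
        by (intros j Hj; pose proof (HJ e (proj1 He) j Hj); lra).
      pose proof (G_derive gamma n b pi e Hj) as HG.
      unfold Ffun, F1. fold G.
      eapply is_derive_eqv.
      apply (is_derive_minus (fun y => y) (fun y => rsum p (fun i => (fun i y => a i * omega i / (a i * G y - lam)) i y))).
      apply is_derive_id.
      apply rsum_derive. intros k Hk. apply term1. exact HG. pose proof (HI e He k Hk); lra.
      unfold minus, plus, opp, one; simpl. apply (f_equal (fun s => 1 + - s)).
      apply rsum_ext. intros k Hk. pose proof (HI e He k Hk). field; repeat split; lra.
    + intros e He.
      assert (Hj : forall j, (j < n)%nat -> 1 + gamma * b j * e <> 0)
        by (intros j Hj; pose proof (HJ e (proj1 He) j Hj); lra).
      pose proof (G_derive gamma n b pi e Hj) as HG.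
      pose proof (Gd_derive gamma n b pi e Hj) as HGd.
      set (q := fun i => (- (a i * omega i) * a i * Gdd gamma n b pi e * (a i * G e - lam)^2
                - - (a i * omega i) * a i * Gd gamma n b pi e * (2 * (a i * Gd gamma n b pi e) * (a i * G e - lam)))
                / ((a i * G e - lam)^2)^2).
      exists (0 - rsum p q). split.
      * apply is_derive_Reals. unfold F1.
        eapply is_derive_eqv.
        apply (is_derive_minus (fun _ => 1) (fun y => rsum p (fun i => (fun i y => (- (a i * omega i) * a i) * Gd gamma n b pi y / (a i * G y - lam)^2) i y))).
        apply is_derive_const.
        apply rsum_derive. intros k Hk. apply term2. exact HG. exact HGd. pose proof (HI e He k Hk); lra.
        unfold minus, plus, opp, zero; simpl. unfold q. reflexivity.
      * assert (Hgdd : 0 < Gdd gamma n b pi e).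
        { unfold Gdd. rewrite <- (rsum_zero n). apply rsum_lt; auto. intros j Hj0.
          pose proof (HJ e (proj1 He) j Hj0). pose proof (hb j Hj0). pose proof (hpi j Hj0).
          apply Rdiv_lt_0_compat; [|apply pow_lt; lra].
          assert (0 < b j * pi j) by nra. assert (0 < (gamma * b j)^2) by (apply pow_lt; nra). nra. }
        assert (rsum p q < rsum p (fun _ => 0)).
        { apply rsum_lt; auto. intros i Hi. unfold q.
          pose proof (HI e He i Hi). pose proof (ha i Hi). pose proof (homega i Hi).
          set (D := a i * G e - lam). fold D in H.
          set (g1 := Gd gamma n b pi e). set (g2 := Gdd gamma n b pi e). fold g2 in Hgdd.
          assert (0 < D^2) by nra.
          assert (0 < (D^2)^2) by nra.
          assert (B : 0 < g2 * D^2 - g1 * (2 * (a i * g1) * D)).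
          { assert (0 <= g1 * g1) by nra.
            assert (0 <= - (2 * a i * D)) by nra.
            assert (0 <= - (2 * a i * D) * (g1 * g1)) by (apply Rmult_le_pos; lra).
            assert (0 < g2 * D^2) by (apply Rmult_lt_0_compat; lra).
            assert (E : g2 * D^2 - g1 * (2 * (a i * g1) * D) = g2 * D^2 + - (2 * a i * D) * (g1 * g1)) by ring.
            rewrite E. lra. }
          assert (K : 0 < a i * omega i * a i) by (apply Rmult_lt_0_compat; [apply Rmult_lt_0_compat|]; lra).
          replace ((- (a i * omega i) * a i * g2 * D ^ 2 - - (a i * omega i) * a i * g1 * (2 * (a i * g1) * D)) / (D ^ 2) ^ 2)
            with (- ((a i * omega i * a i) * (g2 * D^2 - g1 * (2 * (a i * g1) * D)) / (D^2)^2)) by (field; repeat split; try lra; apply pow_nonzero; lra).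
          assert (0 < (a i * omega i * a i) * (g2 * D^2 - g1 * (2 * (a i * g1) * D)) / (D^2)^2)
            by (apply Rdiv_lt_0_compat; [apply Rmult_lt_0_compat|]; lra).
          lra. }
        rewrite rsum_zero in H. lra.
Qed.
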